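(* The space $C^\infty(\mathbb R,\mathcal S(\mathbb R))$ of smooth curves in $\mathcal S(\mathbb R)$ consists (via $c\leftrightarrow f$, $f(t,x)=c(t)(x)$) exactly of all functions $f\in C^\infty(\mathbb R^2,\mathbb R)$ with the following property: for all $k,n,m\in\mathbb N_{\ge0}$ the expression $(1+|x|^2)^k\partial_t^n\partial_x^mf(t,x)$ is bounded uniformly in $x\in\mathbb R$, locally uniformly in $t\in\mathbb R$.
   Context: $\mathcal S(\mathbb R)$ is the nuclear Fréchet space of rapidly decreasing smooth functions $f$, i.e. those for which $x\mapsto(1+|x|^2)^k\partial_x^nf(x)$ is bounded for all $k,n$, with the locally convex topology given by these seminorms. Smoothness of curves is in the usual (convenient) sense. *)

(* Defs.v *)
From Stdlib Require Import Reals.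
From Coquelicot Require Import Coquelicot.
Open Scope R_scope.

Definition smooth1 (g : R -> R) : Prop := forall (n : nat) (x : R), ex_derive_n g n x.

Definition sw (k m : nat) (g : R -> R) (x : R) : R :=
  (1 + (Rabs x) ^ 2) ^ k * Derive_n g m x.

Definition in_Schwartz (g : R -> R) : Prop :=
  smooth1 g /\ forall k m : nat, exists B : R, forall x : R, Rabs (sw k m g x) <= B.

Definition Schwartz_lim (F : R -> R -> R) (h0 : R) (g : R -> R) : Prop :=
  forall (k m : nat) (eps : R), 0 < eps ->
    exists delta : R, 0 < delta /\
      forall h : R, 0 < Rabs (h - h0) < delta ->
        forall x : R, Rabs (sw k m (fun y => F h y - g y) x) <= eps.

(** Smooth curves c : R -> S(R) (c t = fun x => c t x): all iterated derivatives
    exist, the derivative being the limit in S(R) of difference quotients.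
    (For Fréchet spaces such as S(R) this is smoothness in the convenient sense.) *)
Definition smooth_curve_Schwartz (c : R -> R -> R) : Prop :=
  exists d : nat -> R -> R -> R,
    d 0%nat = c /\
    (forall (n : nat) (t : R), in_Schwartz (d n t)) /\
    (forall (n : nat) (t : R),
       Schwartz_lim (fun h x => (d n (t + h) x - d n t x) / h) 0 (d (S n) t)).

(** f in C^oo(R^2,R): a family D n m of jointly continuous functions with
    D 0 0 = f, d/dt D n m = D (n+1) m and d/dx D n m = D n (m+1)
    (so that D n m = ∂_t^n ∂_x^m f). *)
Definition smooth2 (f : R -> R -> R) : Prop :=
  exists D : nat -> nat -> R -> R -> R,
    D 0%nat 0%nat = f /\
    forall (n m : nat) (t x : R),
      is_derive (fun s => D n m s x) t (D (S n) m t x) /\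
      is_derive (fun y => D n m t y) x (D n (S m) t x) /\
      continuity_2d_pt (D n m) t x.

Definition pdt_pdx (f : R -> R -> R) (n m : nat) (t x : R) : R :=
  Derive_n (fun s => Derive_n (fun y => f s y) m x) n t.

(* Main.v *)
Require Import Defs.
From Stdlib Require Import Reals Lra.
From Coquelicot Require Import Coquelicot.
Open Scope R_scope.

Lemma Dn_x (g : R -> R) (G : nat -> R -> R) :
  (forall y, G 0%nat y = g y) -> (forall m y, is_derive (G m) y (G (S m) y)) ->
  forall m y, Derive_n g m y = G m y /\ ex_derive_n g m y.
Proof.
  intros H0 HG m; induction m as [|m IHm]; intro y.
  - split; [simpl; symmetry; apply H0 | exact I].
  - split.
    + simpl. rewrite (Derive_ext _ (G m)) by (intro; apply IHm).
      apply is_derive_unique, HG.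
    + simpl. apply ex_derive_ext with (G m).
      * intro; symmetry; apply IHm.
      * exists (G (S m) y); apply HG.
Qed.

Lemma pdt_eq f (D : nat -> nat -> R -> R -> R) : D 0%nat 0%nat = f ->
  (forall n m t x, is_derive (fun s => D n m s x) t (D (S n) m t x)) ->
  (forall n m t x, is_derive (fun y => D n m t y) x (D n (S m) t x)) ->
  forall n m t x, pdt_pdx f n m t x = D n m t x.
Proof.
  intros H0 Ht Hx n m t x. unfold pdt_pdx.
  rewrite (Derive_n_ext _ (fun s => D 0%nat m s x)).
  - apply (proj1 (Dn_x _ (fun n s => D n m s x) (fun _ => eq_refl) (fun n s => Ht n m s x) n t)).
  - intro s. apply (proj1 (Dn_x (f s) (fun m y => D 0%nat m s y)
       (fun y => f_equal (fun F => F s y) H0) (fun m y => Hx 0%nat m s y) m x)).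
Qed.

Lemma sm_loc g n x : smooth1 g ->
  locally x (fun y : R_UniformSpace => forall k, (k <= n)%nat -> ex_derive_n g k y).
Proof. intros H; apply filter_forall; intros; apply H. Qed.

Lemma sm_scal g a : smooth1 g -> smooth1 (fun y => g y * a).
Proof. intros H n x; apply ex_derive_n_scal_r, H. Qed.

Lemma sm_minus g1 g2 : smooth1 g1 -> smooth1 g2 -> smooth1 (fun y => g1 y - g2 y).
Proof. intros H1 H2 n x; apply ex_derive_n_minus; apply sm_loc; auto. Qed.

Lemma lin g1 g2 g3 h m x : smooth1 g1 -> smooth1 g2 -> smooth1 g3 ->
  Derive_n (fun y => (g1 y - g2 y) / h - g3 y) m x =
  (Derive_n g1 m x - Derive_n g2 m x) / h - Derive_n g3 m x.
Proof.
  intros H1 H2 H3.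
  rewrite (Derive_n_ext _ (fun y => (g1 y * / h - g2 y * / h) - g3 y))
    by (intro; unfold Rdiv; ring).
  rewrite Derive_n_minus.
  2: { apply sm_loc. apply sm_minus; apply sm_scal; auto. }
  2: { apply sm_loc; auto. }
  rewrite Derive_n_minus by (apply sm_loc; apply sm_scal; auto).
  rewrite !Derive_n_scal_r. unfold Rdiv; ring.
Qed.

Section Fwd.
Variable d : nat -> R -> R -> R.
Hypothesis Hs : forall n t, in_Schwartz (d n t).
Hypothesis Hl : forall n t,
  Schwartz_lim (fun h x => (d n (t + h) x - d n t x) / h) 0 (d (S n) t).

Lemma fwd_key k n m t : exists δ C, 0 < δ /\ 0 <= C /\ forall h x, Rabs h < δ ->
  Rabs ((1 + Rabs x ^ 2) ^ k * (Derive_n (d n (t + h)) m x - Derive_n (d n t) m x))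
    <= Rabs h * C.
Proof.
  destruct (Hl n t k m 1 Rlt_0_1) as [δ [Hδ H]].
  destruct (proj2 (Hs (S n) t) k m) as [B HB].
  assert (B0 : 0 <= B) by (eapply Rle_trans; [apply Rabs_pos | apply (HB 0)]).
  exists δ, (1 + B). split; [auto | split; [lra |]].
  intros h x Hh. destruct (Req_dec h 0) as [-> | hn].
  - rewrite Rplus_0_r.
    replace (Derive_n (d n t) m x - Derive_n (d n t) m x) with 0 by ring.
    rewrite Rmult_0_r, Rabs_R0; lra.
  - assert (Hh' : 0 < Rabs (h - 0) < δ) by (rewrite Rminus_0_r; split; [apply Rabs_pos_lt; auto | auto]).
    assert (Hx := H h Hh' x).
    unfold sw in Hx. rewrite lin in Hx by apply (proj1 (Hs _ _)).
    specialize (HB x). unfold sw in HB.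
    set (w := (1 + Rabs x ^ 2) ^ k) in *.
    set (A := Derive_n (d n (t + h)) m x) in *.
    set (A0 := Derive_n (d n t) m x) in *.
    set (E := Derive_n (d (S n) t) m x) in *.
    replace (w * (A - A0)) with (h * (w * ((A - A0) / h - E) + w * E)) by (field; auto).
    rewrite Rabs_mult. apply Rmult_le_compat_l; [apply Rabs_pos |].
    eapply Rle_trans; [apply Rabs_triang |]. lra.
Qed.

Lemma fwd_dt n m t x :
  is_derive (fun s => Derive_n (d n s) m x) t (Derive_n (d (S n) t) m x).
Proof.
  apply is_derive_Reals. intros eps Heps.
  destruct (Hl n t 0%nat m (eps / 2)) as [δ [Hδ H]]; [lra |].
  exists (mkposreal δ Hδ). intros h hn hl. simpl in hl.
  assert (Hh' : 0 < Rabs (h - 0) < δ) by (rewrite Rminus_0_r; split; [apply Rabs_pos_lt; auto | auto]).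
    assert (Hx := H h Hh' x).
  unfold sw in Hx. rewrite lin in Hx by apply (proj1 (Hs _ _)).
  rewrite pow_O, Rmult_1_l in Hx. cbv beta. lra.
Qed.

Lemma fwd_dx n m t x :
  is_derive (fun y => Derive_n (d n t) m y) x (Derive_n (d n t) (S m) x).
Proof. apply Derive_correct. exact (proj1 (Hs n t) (S m) x). Qed.

End Fwd.

Theorem lemma6p3 (f : R -> R -> R) :
  smooth_curve_Schwartz f <->
  (smooth2 f /\
   forall (k n m : nat) (t0 : R),
     exists delta B : R, 0 < delta /\
       forall t x : R, Rabs (t - t0) < delta ->
         Rabs ((1 + (Rabs x) ^ 2) ^ k * pdt_pdx f n m t x) <= B).
Proof.
  split.
  - intros [d [Hd0 [Hs Hl]]].
    assert (Dt := fwd_dt d Hs Hl). assert (Dx := fwd_dx d Hs).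
    assert (HD0 : (fun n m t x => Derive_n (d n t) m x) 0%nat 0%nat = f)
      by (cbv beta; simpl; rewrite Hd0; reflexivity).
    assert (Hpdt : forall n m t x, pdt_pdx f n m t x = Derive_n (d n t) m x)
      by exact (pdt_eq f (fun n m t x => Derive_n (d n t) m x) HD0 Dt Dx).
    split.
    + exists (fun n m t x => Derive_n (d n t) m x). split; [exact HD0 |].
      intros n m t x. split; [apply Dt | split; [apply Dx |]].
      intros eps.
      destruct (fwd_key d Hs Hl 0 n m t) as [δ1 [C1 [Hδ1 [HC1 K]]]].
      destruct (proj2 (Hs n t) 0%nat (S m)) as [B2 HB2].
      assert (B0 : 0 <= B2) by (eapply Rle_trans; [apply Rabs_pos | apply (HB2 0)]).
      assert (Hq : 0 < eps / (2 * (C1 + B2 + 1))).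
      { apply Rdiv_lt_0_compat; [apply cond_pos | lra]. }
      assert (Hδ : 0 < Rmin δ1 (eps / (2 * (C1 + B2 + 1)))) by (apply Rmin_pos; lra).
      exists (mkposreal _ Hδ). intros u v Hu Hv. simpl in Hu, Hv.
      assert (Hu1 := Rlt_le_trans _ _ _ Hu (Rmin_l _ _)).
      assert (Hu2 := Rlt_le_trans _ _ _ Hu (Rmin_r _ _)).
      assert (Hv2 := Rlt_le_trans _ _ _ Hv (Rmin_r _ _)).
      assert (K1 := K (u - t) v Hu1). replace (t + (u - t)) with u in K1 by ring.
      rewrite pow_O, Rmult_1_l in K1.
      assert (K2 : Rabs (Derive_n (d n t) m v - Derive_n (d n t) m x) <= B2 * Rabs (v - x)).
      { apply bounded_variation with (dh := Derive_n (d n t) (S m)). intros s _.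
        split; [apply Dx |]. specialize (HB2 s); unfold sw in HB2.
        rewrite pow_O, Rmult_1_l in HB2; exact HB2. }
      cbv beta.
      replace (Derive_n (d n u) m v - Derive_n (d n t) m x) with
        ((Derive_n (d n u) m v - Derive_n (d n t) m v) + (Derive_n (d n t) m v - Derive_n (d n t) m x)) by ring.
      eapply Rle_lt_trans; [apply Rabs_triang |].
      set (q := eps / (2 * (C1 + B2 + 1))) in *.
      assert (Hqe : q * (2 * (C1 + B2 + 1)) = eps) by (unfold q; field; lra).
      assert (A1 : Rabs (u - t) * C1 <= q * C1) by (apply Rmult_le_compat_r; lra).
      assert (A2 : B2 * Rabs (v - x) <= B2 * q) by (apply Rmult_le_compat_l; lra).
      nra.
    + intros k n m t0.
      destruct (fwd_key d Hs Hl k n m t0) as [δ [C [Hδ [HC K]]]].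
      destruct (proj2 (Hs n t0) k m) as [B0 HB0].
      exists δ, (B0 + δ * C). split; auto. intros t x Ht. rewrite Hpdt.
      specialize (K (t - t0) x Ht). replace (t0 + (t - t0)) with t in K by ring.
      specialize (HB0 x); unfold sw in HB0.
      set (w := (1 + Rabs x ^ 2) ^ k) in *.
      replace (w * Derive_n (d n t) m x) with
        (w * Derive_n (d n t0) m x + w * (Derive_n (d n t) m x - Derive_n (d n t0) m x)) by ring.
      eapply Rle_trans; [apply Rabs_triang |].
      assert (A1 : Rabs (t - t0) * C <= δ * C) by (apply Rmult_le_compat_r; lra).
      lra.
  - intros [[D [HD0 HD]] Hb].
    assert (Ht : forall n m t x, is_derive (fun s => D n m s x) t (D (S n) m t x))
      by (intros; apply HD).
    assert (Hx : forall n m t x, is_derive (fun y => D n m t y) x (D n (S m) t x))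
      by (intros; apply HD).
    assert (Hpdt := pdt_eq f D HD0 Ht Hx).
    assert (HDx : forall n t m y, Derive_n (fun x => D n 0%nat t x) m y = D n m t y /\
                                  ex_derive_n (fun x => D n 0%nat t x) m y)
      by (intros n t; exact (Dn_x (fun x => D n 0%nat t x) (fun m y => D n m t y)
                        (fun _ => eq_refl) (fun m y => Hx n m t y))).
    assert (Sm : forall n t, smooth1 (fun x => D n 0%nat t x)) by (intros n t m y; apply HDx).
    exists (fun n t x => D n 0%nat t x). split; [cbv beta; rewrite HD0; reflexivity |]. split.
    + intros n t. cbv beta. split; [apply Sm |]. intros k m.
      destruct (Hb k n m t) as [δ [B [Hδ HB]]]. exists B. intro x. unfold sw.
      rewrite (proj1 (HDx n t m x)). rewrite <- Hpdt. apply HB.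
      replace (t - t) with 0 by ring; rewrite Rabs_R0; auto.
    + intros n t k m eps Heps.
      destruct (Hb k (S (S n)) m t) as [δ0 [B [Hδ0 HB]]].
      assert (B0 : 0 <= B).
      { eapply Rle_trans; [apply Rabs_pos | apply (HB t 0)].
        replace (t - t) with 0 by ring; rewrite Rabs_R0; auto. }
      assert (Hq : 0 < eps / (B + 1)) by (apply Rdiv_lt_0_compat; lra).
      exists (Rmin δ0 (eps / (B + 1))). split; [apply Rmin_pos; lra |].
      intros h [hpos hlt] x. rewrite Rminus_0_r in hpos, hlt. unfold sw. cbv beta.
      rewrite lin by apply Sm. rewrite !(proj1 (HDx _ _ _ _)).
      assert (hn : h <> 0) by (intro E; rewrite E, Rabs_R0 in hpos; lra).
      assert (Hth : Rabs (t + h - t) <= Rabs h) by (right; f_equal; ring).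
      destruct (MVT_cor4 (fun s => D n m s x) (fun s => D (S n) m s x) t (Rabs h)
                  (fun c _ => Ht n m c x) (t + h) Hth) as [c [Hc1 Hc2]].
      assert (Hct : Rabs (c - t) <= Rabs h) by lra.
      destruct (MVT_cor4 (fun s => D (S n) m s x) (fun s => D (S (S n)) m s x) t (Rabs h)
                  (fun c _ => Ht (S n) m c x) c Hct) as [c2 [Hc3 Hc4]].
      cbv beta in Hc1, Hc3.
      replace (t + h - t) with h in Hc1 by ring.
      rewrite Hc1.
      replace (D (S n) m c x * h / h - D (S n) m t x) with (D (S n) m c x - D (S n) m t x)
        by (field; auto).
      rewrite Hc3.
      set (w := (1 + Rabs x ^ 2) ^ k).
      replace (w * (D (S (S n)) m c2 x * (c - t))) with ((w * D (S (S n)) m c2 x) * (c - t)) by ring.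
      rewrite Rabs_mult.
      assert (Hm : Rmin δ0 (eps / (B + 1)) <= δ0) by apply Rmin_l.
      assert (Hm2 : Rmin δ0 (eps / (B + 1)) <= eps / (B + 1)) by apply Rmin_r.
      assert (HB2 : Rabs (w * D (S (S n)) m c2 x) <= B).
      { unfold w; rewrite <- Hpdt. apply HB. lra. }
      assert (Hqe : eps / (B + 1) * (B + 1) = eps) by (field; lra).
      assert (A1 : Rabs (w * D (S (S n)) m c2 x) * Rabs (c - t) <= B * Rabs (c - t))
        by (apply Rmult_le_compat_r; [apply Rabs_pos | lra]).
      assert (A2 : Rabs (c - t) * (B + 1) <= eps / (B + 1) * (B + 1))
        by (apply Rmult_le_compat_r; lra).
      assert (A3 := Rabs_pos (c - t)).
      nra.
Qed.
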